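(* Let $H$ be a countable group, and suppose $G\le H\le K$ with $G$ finitely generated and $C_K(G)=1$. Then all terms of the normalizer tower of $H$ in $K$ are countable, and therefore the tower has countable height.
   Context: The normalizer tower of $H$ in $K$ is defined by $N^0=H$, $N^{\alpha+1}=N_K(N^\alpha)$ and $N^\alpha=\bigcup_{\beta<\alpha}N^\beta$ for limit ordinals $\alpha$. Its height is the least ordinal $\alpha$ with $N^{\alpha}=N^{\alpha+1}$. $C_K(G)$ is the centralizer of $G$ in $K$. *)

(* Defs.v *)
From HB Require Import structures.
From mathcomp Require Import all_boot.
From mathcomp Require Import boolp classical_sets cardinality.
Set Implicit Arguments. Unset Strict Implicit. Unset Printing Implicit Defensive.

Local Open Scope classical_set_scope.
Local Open Scope group_scope.

Section GroupDefs.
Variable K : groupType.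

Definition is_subgroup (S : set K) : Prop :=
  S 1 /\ (forall x y, S x -> S y -> S (x * y)) /\ (forall x, S x -> S x^-1).

Definition generated (A : set K) : set K :=
  [set x | forall S, is_subgroup S -> A `<=` S -> S x].

Definition fin_generated (S : set K) : Prop :=
  exists s : seq K, S = generated [set x | x \in s].

Definition centralizer (S : set K) : set K :=
  [set x | forall g, S g -> x * g = g * x].

Definition normalizer (S : set K) : set K :=
  [set x | forall s, S (x^-1 * s * x) <-> S s].

(* Strict well-orders, used as (initial segments of) the ordinals. *)
Definition strict_well_order (W : Type) (lt : W -> W -> Prop) : Prop :=
  well_founded lt /\
  (forall u v w, lt u v -> lt v w -> lt u w) /\
  (forall u v, lt u v \/ u = v \/ lt v u).

(* N is the normalizer tower of H in K indexed by the well-order (W, lt):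
   N^0 = H, N^(a+1) = N_K(N^a), N^a = union_{b<a} N^b for limit a. *)
Definition normalizer_tower (H : set K) (W : Type) (lt : W -> W -> Prop)
    (N : W -> set K) : Prop :=
  forall w,
    ((forall v, ~ lt v w) -> N w = H) /\
    (forall v, lt v w -> (forall u, ~ (lt v u /\ lt u w)) ->
        N w = normalizer (N v)) /\
    ((exists v, lt v w) -> (forall v, lt v w -> exists u, lt v u /\ lt u w) ->
        N w = \bigcup_(v in [set v | lt v w]) N v).

End GroupDefs.

(* Main.v *)
Require Import Defs.
From HB Require Import structures.
From mathcomp Require Import all_boot.
From mathcomp Require Import boolp classical_sets cardinality.
Set Implicit Arguments. Unset Strict Implicit. Unset Printing Implicit Defensive.

Local Open Scope classical_set_scope.

Section Helpers.
Local Open Scope group_scope.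
Variable K : groupType.
Implicit Types S : set K.

Lemma normalizer_subgroup S : is_subgroup (normalizer S).
Proof.
split; [|split].
- by move=> s /=; rewrite invg1 mul1g mulg1.
- move=> x y Hx Hy s /=.
  have -> : (x * y)^-1 * s * (x * y) = y^-1 * (x^-1 * s * x) * y.
    by rewrite invgM !mulgA.
  by rewrite Hy Hx.
- move=> x Hx s /=; rewrite invgK.
  have := Hx (x * s * x^-1).
  have -> : x^-1 * (x * s * x^-1) * x = s.
    by rewrite !mulgA mulVg mul1g -mulgA mulVg mulg1.
  by move=> [h1 h2]; split.
Qed.

Lemma sub_normalizer S : is_subgroup S -> S `<=` normalizer S.
Proof.
move=> [S1 [SM SV]] x Sx s /=; split => h.
- have := SM _ _ (SM _ _ Sx h) (SV _ Sx).
  by rewrite !mulgA mulgV mul1g mulgK.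
- by apply: (SM) => //; apply: (SM) => //; exact: SV.
Qed.

Lemma gen_sub (A : set K) : A `<=` generated A.
Proof. by move=> x Ax S _ AS; exact: AS. Qed.

Lemma commute_gen (A : set K) x :
  (forall g, A g -> x * g = g * x) -> forall g, generated A g -> x * g = g * x.
Proof.
move=> HA g Hg; apply: (Hg [set g | x * g = g * x]) => //.
split; [|split] => /=.
- by rewrite mulg1 mul1g.
- by move=> a b ha hb; rewrite mulgA ha -mulgA hb mulgA.
- move=> a ha; apply: (mulgI a); rewrite mulgA.
  rewrite -ha -mulgA mulgV mulg1 mulgA mulgV mul1g //.
Qed.

End Helpers.
Section Tower.
Local Open Scope group_scope.
Variable K : groupType.
Variables (H : set K) (W : Type) (lt : W -> W -> Prop) (N : W -> set K).
Hypothesis Hwo : strict_well_order lt.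
Hypothesis Ht : normalizer_tower H lt N.
Hypothesis HH : is_subgroup H.

Lemma wcases w :
  (forall v, ~ lt v w) \/
  (exists v, lt v w /\ forall u, ~ (lt v u /\ lt u w)) \/
  ((exists v, lt v w) /\ forall v, lt v w -> exists u, lt v u /\ lt u w).
Proof.
case: (pselect (exists v, lt v w)) => [ex|nex]; last first.
  by left => v hv; apply: nex; exists v.
right; case: (pselect (exists v, lt v w /\ forall u, ~ (lt v u /\ lt u w))) => [s|ns].
  by left.
right; split => // v hv.
apply: contrapT => nu; apply: ns; exists v; split => // u [h1 h2].
by apply: nu; exists u.
Qed.

Lemma tower_main w :
  is_subgroup (N w) /\ forall u, lt u w -> normalizer (N u) `<=` N w.
Proof.
case: Hwo => wf [tr tri].
elim/(well_founded_ind wf): w => w IH.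
have [Hw1 [Hw2 Hw3]] := Ht w.
case: (wcases w) => [bot|[[v [hv hs]]|[ex hl]]].
- by rewrite Hw1 //; split => // u /bot.
- rewrite (Hw2 v hv hs); split; first exact: normalizer_subgroup.
  move=> u hu; case: (tri u v) => [huv|[->//|hvu]].
    have [sv sub] := IH v hv.
    by move=> x hx; exact: (sub_normalizer sv (sub u huv x hx)).
  by exfalso; apply: (hs u).
- rewrite (Hw3 ex hl); split; last first.
    move=> u hu x hx; have [u' [h1 h2]] := hl u hu.
    by exists u' => //; exact: (proj2 (IH u' h2) u h1 x hx).
  have mono : forall v1 v2, lt v1 w -> lt v2 w -> lt v1 v2 -> N v1 `<=` N v2.
    move=> v1 v2 h1 h2 h12 x hx.
    exact: (proj2 (IH v2 h2) v1 h12 x (sub_normalizer (proj1 (IH v1 h1)) hx)).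
  split; [|split].
  + by case: ex => v hv; exists v => //; case: (proj1 (IH v hv)).
  + move=> x y [v1 h1 hx] [v2 h2 hy].
    case: (tri v1 v2) => [h12|[e|h21]].
    * exists v2 => //; case: (proj1 (IH v2 h2)) => _ [M _]; apply: M => //.
      exact: (mono v1 v2).
    * subst v2; exists v1 => //; case: (proj1 (IH v1 h1)) => _ [M _]; exact: M.
    * exists v1 => //; case: (proj1 (IH v1 h1)) => _ [M _]; apply: M => //.
      exact: (mono v2 v1).
  + move=> x [v hv hx]; exists v => //; case: (proj1 (IH v hv)) => _ [_ V].
    exact: V.
Qed.

Lemma tower_mono u w : lt u w -> N u `<=` N w.
Proof.
move=> h x hx; exact: (proj2 (tower_main w) u h x (sub_normalizer (proj1 (tower_main u)) hx)).
Qed.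

Lemma tower_contains w : H `<=` N w.
Proof.
case: Hwo => wf [tr tri].
elim/(well_founded_ind wf): w => w IH.
have [Hw1 [Hw2 Hw3]] := Ht w.
case: (wcases w) => [bot|[[v [hv hs]]|[ex hl]]].
- by rewrite Hw1.
- move=> x /(IH v hv) hx; exact: tower_mono hx.
- rewrite (Hw3 ex hl); case: ex => v hv x hx; exists v => //; exact: IH.
Qed.

End Tower.

Section Count.
Local Open Scope group_scope.
Variable K : groupType.
Variable s : seq K.
Variable H : set K.
Hypothesis Hc : centralizer (generated [set x | x \in s]) = [set 1].

Lemma phi_inj x y : (forall g, g \in s -> x^-1 * g * x = y^-1 * g * y) -> x = y.
Proof.
move=> e.
have hc : centralizer (generated [set x | x \in s]) (y * x^-1).
  apply: commute_gen => g /= gs.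
  move/(congr1 (fun z => y * z * x^-1)): (e g gs).
  rewrite !mulgA mulgV mul1g mulgK => ->.
  by rewrite ?mulgA.
rewrite Hc /= in hc.
by symmetry; apply: divg1_eq.
Qed.

Definition Tset (C : set K) : set K :=
  [set x | forall g, g \in s -> C (x^-1 * g * x)].

Lemma countT C : countable C -> countable (Tset C).
Proof.
move=> /countable_injP [f finj]; apply/countable_injP.
exists (fun x => pickle (map (fun g => f (x^-1 * g * x)) s)).
move=> x y; rewrite !inE => hx hy /(pcan_inj pickleK) e.
apply: phi_inj.
suff : forall s', (forall g, g \in s' -> g \in s) ->
  map (fun g => f (x^-1 * g * x)) s' = map (fun g => f (y^-1 * g * y)) s' ->
  forall g, g \in s' -> x^-1 * g * x = y^-1 * g * y.
  by move=> /(_ s (fun g h => h) e).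
elim=> [//|a s' IH] sub /= [e1 e2] g.
rewrite in_cons => /orP [/eqP ->|gs'].
  apply: finj e1; apply: mem_set.
    by apply: hx; apply: sub; rewrite in_cons eqxx.
  by apply: hy; apply: sub; rewrite in_cons eqxx.
apply: IH => //; move=> b bs; apply: sub; by rewrite in_cons bs orbT.
Qed.

Fixpoint Cseq (k : nat) : set K :=
  match k with 0 => H | k.+1 => Cseq k `|` Tset (Cseq k) end.

Lemma countC : countable H -> forall k, countable (Cseq k).
Proof.
move=> cH; elim=> [//|k IH] /=.
have -> : Cseq k `|` Tset (Cseq k) =
  \bigcup_(b in [set: bool]) (if b then Cseq k else Tset (Cseq k)).
  apply/seteqP; split => x.
    by case=> h; [exists true | exists false].
  by case=> [[] _ h]; [left | right].
apply: bigcup_countable => // -[] _ //; exact: countT.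
Qed.

Lemma Cmono k j : (k <= j)%N -> Cseq k `<=` Cseq j.
Proof.
move=> /subnKC <-; elim: (j - k)%N => [|i IH]; first by rewrite addn0.
by rewrite addnS => x /IH hx /=; left.
Qed.

Lemma bound x (s' : seq K) : (forall g, g \in s' -> exists k, Cseq k (x^-1 * g * x)) ->
  exists k, forall g, g \in s' -> Cseq k (x^-1 * g * x).
Proof.
elim: s' => [|a s' IH] h; first by exists 0%N.
have [k1 h1] := h a (mem_head _ _).
have [k2 h2] : exists k, forall g, g \in s' -> Cseq k (x^-1 * g * x).
  by apply: IH => g gs; apply: h; rewrite in_cons gs orbT.
exists (maxn k1 k2) => g; rewrite in_cons => /orP [/eqP ->|gs].
  exact: (Cmono (leq_maxl k1 k2)).
exact: (Cmono (leq_maxr k1 k2) (h2 g gs)).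
Qed.

End Count.

Theorem proposition1p6 (K : groupType) (G H : set K) :
  is_subgroup G -> is_subgroup H -> G `<=` H ->
  fin_generated G -> countable H ->
  centralizer G = [set 1%g] ->
  forall (W : Type) (lt : W -> W -> Prop) (N : W -> set K),
    strict_well_order lt -> normalizer_tower H lt N ->
    (forall w, countable (N w)) /\
    (forall w, N w = normalizer (N w) ->
       (forall u, lt u w -> N u <> normalizer (N u)) ->
       countable [set u | lt u w]).
Proof.
move=> HG HHs GH [s Gs] cH Hc W lt N Hwo Ht.
rewrite Gs in Hc.
have cU : countable (\bigcup_(k in [set: nat]) Cseq s H k).
  by apply: bigcup_countable => // k _; exact: countC.
have sub : forall w, N w `<=` \bigcup_(k in [set: nat]) Cseq s H k.
  case: (Hwo) => wf [tr tri].
  elim/(well_founded_ind wf) => w IH.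
  have [Hw1 [Hw2 Hw3]] := Ht w.
  case: (wcases lt w) => [bot|[[v [hv hs]]|[ex hl]]].
  - by rewrite Hw1 // => x hx; exists 0%N.
  - rewrite (Hw2 v hv hs) => x hx.
    have [k hk] : exists k, forall g, g \in s -> Cseq s H k (x^-1 * g * x)%g.
      apply: bound => g gs.
      have Gg : G g by rewrite Gs; apply: gen_sub.
      have Nvg : N v g by exact: (tower_contains Hwo Ht HHs v (GH _ Gg)).
      have := IH v hv _ (proj2 (hx g) Nvg).
      by case=> k _ hk; exists k.
    by exists k.+1 => //=; right.
  - rewrite (Hw3 ex hl) => x [v hv hx]; exact: IH v hv x hx.
have cN : forall w, countable (N w).
  by move=> w; apply: sub_countable (subset_card_le (sub w)) cU.
split => // w _ hne.
have [pk hpk] : {f : W -> K & forall u, lt u w ->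
    normalizer (N u) (f u) /\ ~ N u (f u)}.
  apply: (@choice W K (fun u x => lt u w -> normalizer (N u) x /\ ~ N u x)) => u.
  case: (pselect (lt u w)) => hu; last by exists 1%g.
  apply: contrapT => nex; apply: (hne u hu); apply/seteqP; split.
    exact: (sub_normalizer (proj1 (tower_main Hwo Ht HHs u))).
  move=> x hx; apply: contrapT => nx; apply: nex; exists x => _; by split.
have /countable_injP [fN fNinj] := cN w.
apply/countable_injP; exists (fun u => fN (pk u)).
move=> u1 u2; rewrite !inE /= => h1 h2 e.
have [p1 n1] := hpk u1 h1.
have [p2 n2] := hpk u2 h2.
have e' : pk u1 = pk u2.
  apply: fNinj e; apply: mem_set.
    exact: (proj2 (tower_main Hwo Ht HHs w) u1 h1).
  exact: (proj2 (tower_main Hwo Ht HHs w) u2 h2).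
case: (Hwo) => _ [_ tri].
case: (tri u1 u2) => [h12|[//|h21]].
  by exfalso; apply: n2; rewrite -e'; exact: (proj2 (tower_main Hwo Ht HHs u2) u1 h12).
by exfalso; apply: n1; rewrite e'; exact: (proj2 (tower_main Hwo Ht HHs u1) u2 h21).
Qed.
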